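(* Let $S$ be a graded reduced affine monoid and $\tilde S$ as in the context. Suppose the defining congruence $\sim_S$ is generated by $\{(x^{\lambda},x^{\mu})\mid(\lambda,\mu)\in\Lambda\}$ for some $\Lambda\subset\mathbb{N}_0^{\mathcal{A}(S)}\times\mathbb{N}_0^{\mathcal{A}(S)}$. For each $\lambda\in\mathbb{N}_0^{\mathcal{A}(S)}$ such that $(\lambda,\mu)\in\Lambda$ or $(\mu,\lambda)\in\Lambda$ for some $\mu$, and each integer $0\le i\le|a^{\lambda}|$, choose $\lambda[i]\in\mathbb{N}_0^{\mathcal{A}(\tilde S)}$ with $\kappa(\lambda[i])=\lambda$ and $\delta(\lambda[i])=i$. Then the defining congruence $\sim_{\tilde S}$ of $\tilde S$ is generated by $\{(x^{\lambda[i]},x^{\mu[i]})\mid(\lambda,\mu)\in\Lambda,\ 0\le i\le|a^{\lambda}|\}\cup\{(x_{a[k]}x_{b[l]},x_{a[k+1]}x_{b[l-1]})\mid a,b\in\mathcal{A}(S),\ 0\le k\le|a|-1,\ 1\le l\le|b|\}$.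
   Context: A monoid is a commutative cancellative semigroup with identity; affine means a finitely generated submonoid of a finitely generated free abelian group; reduced means the identity is the only unit. $S$ (written multiplicatively) is graded: $S=\bigsqcup_{d\in\mathbb{N}_0}S_d$ with $S_dS_e\subseteq S_{d+e}$, $|s|=d$ for $s\in S_d$. $\mathcal{A}(S)$ is the set of atoms; $a^{\lambda}=\prod_a a^{\lambda(a)}$. For a reduced affine monoid $T$ with atoms $\mathcal{A}(T)$, its defining congruence $\sim_T$ is the congruence on the free commutative monoid $\{x^{\alpha}\mid\alpha\in\mathbb{N}_0^{\mathcal{A}(T)}\}$ on indeterminates $x_t$ ($t\in\mathcal{A}(T)$) with $x^{\alpha}\sim_T x^{\gamma}$ iff $\prod t^{\alpha(t)}=\prod t^{\gamma(t)}$ in $T$. Define $\tilde S=\{s[i]\mid s\in S,\ 0\le i\le|s|\}$ with $s[i]\cdot t[j]=(st)[i+j]$; its atoms are $\mathcal{A}(\tilde S)=\{a[i]\mid a\in\mathcal{A}(S),0\le i\le|a|\}$. Define $\kappa:\mathbb{N}_0^{\mathcal{A}(\tilde S)}\to\mathbb{N}_0^{\mathcal{A}(S)}$, $\kappa(\lambda)(a)=\sum_{i=0}^{|a|}\lambda(a[i])$, and $\delta(\lambda)=\sum_{a[i]}i\,\lambda(a[i])$. *)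

(* Defs.v *)
From HB Require Import structures.
From mathcomp Require Import all_boot all_order all_algebra.
Set Implicit Arguments. Unset Strict Implicit. Unset Printing Implicit Defensive.
Import Order.TTheory GRing.Theory Num.Theory.
Local Open Scope ring_scope.

(* Monoids are written additively as subsets of an abelian group V;
   the ambient group for S is Z^n = 'rV[int]_n, for S~ it is Z^n x Z. *)
Section Monoids.
Variable V : zmodType.

Definition submonoid (S : V -> Prop) : Prop :=
  S 0 /\ forall x y, S x -> S y -> S (x + y).

Definition fingen (S : V -> Prop) : Prop :=
  exists gens : seq V, (forall g, g \in gens -> S g) /\
    forall s, S s -> exists c : nat -> nat, s = \sum_(i < size gens) gens`_i *+ c i.

Definition reduced (S : V -> Prop) : Prop :=
  forall x, S x -> S (- x) -> x = 0.

Definition is_atom (S : V -> Prop) (a : V) : Prop :=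
  S a /\ a != 0 /\ forall b c, S b -> S c -> a = b + c -> b = 0 \/ c = 0.

(* grading S = disjoint union of S_d with S_d S_e in S_(d+e); |s| = deg s *)
Definition graded (S : V -> Prop) (deg : V -> nat) : Prop :=
  forall s t, S s -> S t -> deg (s + t) = (deg s + deg t)%N.

(* S~ = { s[i] | s in S, 0 <= i <= |s| }, with s[i] encoded as (s, i) *)
Definition tilde (S : V -> Prop) (deg : V -> nat) : V * int -> Prop :=
  fun p => exists (s : V) (i : nat), S s /\ (i <= deg s)%N /\ p = (s, i%:Z).

End Monoids.

(* exponent vectors N_0^{A}, where the atom set A is enumerated by a uniq
   sequence of length k; position j stands for the indeterminate x_{A`_j} *)
Definition expo (k : nat) := {ffun 'I_k -> nat}.

Definition addx (k : nat) (f g : expo k) : expo k := [ffun i => (f i + g i)%N].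

Definition evalm {V : zmodType} (A : seq V) (al : expo (size A)) : V :=
  \sum_(i < size A) A`_i *+ al i.

Arguments evalm {V} A al.
Definition defcong {V : zmodType} (A : seq V) (al ga : expo (size A)) : Prop :=
  evalm A al = evalm A ga.

Arguments defcong {V} A al ga.
Definition is_congruence (k : nat) (C : expo k -> expo k -> Prop) : Prop :=
  (forall f, C f f) /\ (forall f g, C f g -> C g f) /\
  (forall f g h, C f g -> C g h -> C f h) /\
  (forall f g h, C f g -> C (addx f h) (addx g h)).

Definition gen_cong (k : nat) (R : expo k -> expo k -> Prop) (f g : expo k) : Prop :=
  forall C, is_congruence C -> (forall p q, R p q -> C p q) -> C f g.

Arguments gen_cong {k} R f g.
Definition generates (k : nat) (R C : expo k -> expo k -> Prop) : Prop :=
  forall f g, C f g <-> gen_cong R f g.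

Arguments generates {k} R C.
Definition kappa {V : zmodType} (A : seq V) (At : seq (V * int))
  (l : expo (size At)) : expo (size A) :=
  [ffun j : 'I_(size A) => (\sum_(k < size At | (nth (0 : V * int)%R At k).1 == nth (0 : V)%R A j) l k)%N].

Arguments kappa {V} A At l.
Definition delta {V : zmodType} (At : seq (V * int)) (l : expo (size At)) : int :=
  \sum_(k < size At) (l k)%:Z * (At`_k).2.

Arguments delta {V} At l.
Definition unitx {V : zmodType} (At : seq (V * int)) (x : V * int) : expo (size At) :=
  [ffun j : 'I_(size At) => nat_of_bool (At`_j == x)].
Arguments unitx {V} At x.

(* Main.v *)
Require Import Defs.
From mathcomp Require Import all_boot all_order all_algebra.
From mathcomp Require Import zify.
Set Implicit Arguments. Unset Strict Implicit. Unset Printing Implicit Defensive.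
Import GRing.Theory.

Definition zx k : expo k := [ffun _ => 0%N].
Definition ex k (i : 'I_k) : expo k := [ffun j => nat_of_bool (j == i)].

Lemma addxC k (f g : expo k) : addx f g = addx g f.
Proof. by apply/ffunP => i; rewrite !ffunE addnC. Qed.
Lemma addxA k (f g h : expo k) : addx f (addx g h) = addx (addx f g) h.
Proof. by apply/ffunP => i; rewrite !ffunE addnA. Qed.
Lemma addx0 k (f : expo k) : addx f (zx k) = f.
Proof. by apply/ffunP => i; rewrite !ffunE addn0. Qed.
Lemma addxI k (f g h : expo k) : addx h f = addx h g -> f = g.
Proof. move=> /ffunP H; apply/ffunP => i; move: (H i); rewrite !ffunE; exact: addnI. Qed.

Lemma sum_addx k (f g : expo k) : (\sum_i addx f g i = \sum_i f i + \sum_i g i)%N.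
Proof. by rewrite -big_split; apply eq_bigr => i _; rewrite ffunE. Qed.
Lemma sum_ex k (i : 'I_k) : (\sum_j ex i j = 1)%N.
Proof.
rewrite (bigD1 i) //= big1 => [|j /negbTE Hj]; by rewrite ffunE ?eqxx ?Hj.
Qed.

Lemma expo_ind k (P : expo k -> Prop) :
  P (zx k) -> (forall i f, P f -> P (addx (ex i) f)) -> forall f, P f.
Proof.
move=> P0 PS f; move Hf: (\sum_i f i)%N => N.
elim: N f Hf => [|N IH] f Hf.
  have -> : f = zx k; last exact P0.
  apply/ffunP => i; rewrite ffunE; apply/eqP; rewrite -leqn0 -Hf.
  by rewrite (bigD1 i) //= leq_addr.
case: (pickP (fun i => 0 < f i)%N) => [i Hi | H0]; last first.
  by rewrite big1 in Hf => // i _; move: (H0 i) => /negbT; rewrite lt0n negbK => /eqP.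
set f' := [ffun j => f j - (j == i)]%N.
have Ef : f = addx (ex i) f'.
  apply/ffunP => j; rewrite !ffunE; case: eqP => [->|_] /=; first by move: Hi => /=; lia.
  by rewrite subn0.
rewrite Ef; apply PS, IH; move: Hf; rewrite Ef sum_addx sum_ex add1n; by case.
Qed.

Section EvalGen.
Variables (V : zmodType) (B : seq V).
Local Open Scope ring_scope.
Lemma evalmD (f g : expo (size B)) : evalm B (addx f g) = evalm B f + evalm B g.
Proof. by rewrite /evalm -big_split; apply eq_bigr => i _; rewrite ffunE mulrnDr. Qed.
Lemma evalm_ex (i : 'I_(size B)) : evalm B (ex i) = B`_i.
Proof.
rewrite /evalm (bigD1 i) //= big1 => [|j Hj]; by rewrite ffunE ?eqxx ?(negbTE Hj) ?addr0.
Qed.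
Lemma evalm0 : evalm B (zx _) = 0.
Proof. by rewrite /evalm big1 // => i _; rewrite ffunE. Qed.
End EvalGen.

Lemma gen_cong_cong k (R : expo k -> expo k -> Prop) : is_congruence (gen_cong R).
Proof.
split; [|split; [|split]].
- by move=> f C [H _] _.
- by move=> f g H C HC HR; have [_ [Hs _]] := HC; apply: Hs; exact: H.
- by move=> f g h H1 H2 C HC HR; have [_ [_ [Ht _]]] := HC; apply: Ht (H1 C HC HR) (H2 C HC HR).
- by move=> f g h H C HC HR; have [_ [_ [_ Ha]]] := HC; apply: Ha; exact: H.
Qed.

Lemma decomp k (f : expo k) i : (0 < f i)%N -> exists f', f = addx (ex i) f'.
Proof.
move=> Hi; exists [ffun j => f j - (j == i)]%N.
apply/ffunP => j; rewrite !ffunE; case: eqP => [->|_] /=; first by move: Hi; lia.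
by rewrite subn0.
Qed.

Lemma sum_pos (I : finType) (P : pred I) (F : I -> nat) :
  (0 < \sum_(i | P i) F i)%N -> exists i, P i && (0 < F i)%N.
Proof.
move=> H; case: (pickP (fun i => P i && (0 < F i)%N)) => [i Hi | H0]; first by exists i.
move: H; rewrite big1 // => i Pi; move: (H0 i); rewrite Pi /= => /negbT; rewrite lt0n negbK => /eqP //.
Qed.

Lemma gen_cong_incl k (R : expo k -> expo k -> Prop) f g : R f g -> gen_cong R f g.
Proof. by move=> H C _ HR; apply HR. Qed.

Section Main.
Local Open Scope ring_scope.
Variables (n : nat) (S : 'rV[int]_n -> Prop) (deg : 'rV[int]_n -> nat)
  (A : seq 'rV[int]_n) (At : seq ('rV[int]_n * int)).
Hypotheses (HS : submonoid S) (Hgr : graded S deg) (HAu : uniq A)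
  (HA : forall x, x \in A <-> is_atom S x) (HAtu : uniq At)
  (HAt : forall x, x \in At <-> is_atom (tilde S deg) x).

Lemma deg0 : deg 0 = 0%N.
Proof.
have := Hgr HS.1 HS.1; rewrite addr0 => /eqP; rewrite -{1}[deg 0]addn0 eqn_add2l eq_sym.
by move/eqP.
Qed.

Lemma tilde_atomP x : is_atom (tilde S deg) x <->
  exists a (t : nat), x = (a, t%:Z) /\ is_atom S a /\ (t <= deg a)%N.
Proof.
split.
- case=> [[s [i [Ss [Hi ->]]]] [Hx0 Hind]].
  exists s, i; split=> //; split=> //; split=> //; split.
  + apply: contra Hx0 => /eqP Hs0; subst s; move: Hi; rewrite deg0 leqn0 => /eqP->.
    by apply/eqP.
  + move=> b c Sb Sc Hs.
    have Hdeg : deg s = (deg b + deg c)%N by rewrite Hs; apply Hgr.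
    set i1 := minn i (deg b).
    have Hb : tilde S deg (b, i1%:Z) by exists b, i1; split=> //; split=> //; rewrite /i1 geq_minr.
    have Hc : tilde S deg (c, (i - i1)%:Z) by exists c, (i - i1)%N; split=> //; split=> //; rewrite /i1; lia.
    have E : (s, i%:Z) = (b, i1%:Z) + (c, (i - i1)%:Z).
      change ((s, i%:Z) = (b + c, i1%:Z + (i - i1)%:Z)); rewrite -PoszD Hs; congr (_, Posz _).
      rewrite /i1; lia.
    case: (Hind _ _ Hb Hc E) => [/(congr1 fst) /= -> | /(congr1 fst) /= ->]; by [left|right].
- case=> a [t [-> [[Sa [Ha0 Hai]] Ht]]].
  split; first by exists a, t.
  split; first by apply: contra Ha0 => /eqP H; apply/eqP; exact (congr1 fst H).
  move=> y z [b [i [Sb [Hi ->]]]] [c [j [Sc [Hj ->]]]] E.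
  have Habc : a = b + c := congr1 fst E.
  case: (Hai _ _ Sb Sc Habc) => [Hb|Hc]; [left|right]; subst.
  + by move: Hi; rewrite deg0 leqn0 => /eqP ->.
  + by move: Hj; rewrite deg0 leqn0 => /eqP ->.
Qed.

Lemma At_mem (k : 'I_(size At)) :
  exists a (t : nat), At`_k = (a, t%:Z) /\ a \in A /\ (t <= deg a)%N.
Proof.
have /HAt /tilde_atomP [a [t [E [Ha Ht]]]] := mem_nth 0 (ltn_ord k).
by exists a, t; split=> //; split=> //; apply/HA.
Qed.

Definition lvl (k : 'I_(size At)) : nat := absz (At`_k).2.
Lemma akey_lt (k : 'I_(size At)) : leq (index (At`_k).1 A).+1 (size A).
Proof. by rewrite index_mem; have [a [t [-> [Ha _]]]] := At_mem k. Qed.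
Definition akey (k : 'I_(size At)) : 'I_(size A) := Ordinal (akey_lt k).

Lemma atK (k : 'I_(size At)) : At`_k = (A`_(akey k), (lvl k)%:Z) /\ leq (lvl k) (deg A`_(akey k)).
Proof.
have [a [t [E [Ha Ht]]]] := At_mem k.
by rewrite /lvl /akey /= E /= nth_index.
Qed.

Lemma at_ex (j : 'I_(size A)) (t : nat) :
  leq t (deg A`_j) -> exists k : 'I_(size At), At`_k = (A`_j, t%:Z).
Proof.
move=> Ht.
have Hin : (A`_j, t%:Z) \in At.
  apply/HAt/tilde_atomP; exists A`_j, t; split=> //; split=> //; apply/HA; exact: mem_nth.
have Hlt : leq (index (A`_j, t%:Z) At).+1 (size At) by rewrite index_mem.
by exists (Ordinal Hlt); rewrite /= nth_index.
Qed.

Lemma akey_of (k : 'I_(size At)) (j : 'I_(size A)) : (At`_k).1 = A`_j -> akey k = j.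
Proof. by move=> E; apply/val_inj; rewrite /= E index_uniq. Qed.

Lemma at_keys (k : 'I_(size At)) (j : 'I_(size A)) (t : nat) : At`_k = (A`_j, t%:Z) -> akey k = j /\ lvl k = t.
Proof. by move=> E; split; [apply: akey_of; rewrite E | rewrite /lvl E]. Qed.

Lemma mem_At a (t : nat) : is_atom S a -> leq t (deg a) -> (a, t%:Z) \in At.
Proof. by move=> Ha Ht; apply/HAt/tilde_atomP; exists a, t. Qed.

Definition dn (f : expo (size At)) : nat := (\sum_k f k * lvl k)%N.
Local Notation kap := (kappa A At).

Lemma uex (k : 'I_(size At)) : unitx At At`_k = ex k.
Proof. by apply/ffunP => j; rewrite !ffunE (nth_uniq _ (ltn_ord j) (ltn_ord k) HAtu). Qed.

Lemma unitx_eval x : x \in At -> evalm At (unitx At x) = x.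
Proof.
move=> Hx; have Hlt : leq (index x At).+1 (size At) by rewrite index_mem.
have E : At`_(Ordinal Hlt) = x by rewrite /= nth_index.
by rewrite -{1}E uex evalm_ex.
Qed.

Lemma kapD (f g : expo (size At)) : kap (addx f g) = addx (kap f) (kap g).
Proof. by apply/ffunP => j; rewrite !ffunE -big_split; apply eq_bigr => i _; rewrite ffunE. Qed.

Lemma kap_ex (k : 'I_(size At)) : kap (ex k) = ex (akey k).
Proof.
apply/ffunP => j; rewrite !ffunE big_mkcond (bigD1 k) //= big1 => [|i Hi]; last first.
  by rewrite ffunE (negbTE Hi); case: ifP.
rewrite ffunE eqxx addn0 (atK k).1 /= (nth_uniq 0 (akey_lt k) (ltn_ord j) HAu) eq_sym.
by rewrite /akey -val_eqE /=; case: eqP.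
Qed.

Lemma kap0 : kap (zx _) = zx _.
Proof. by apply/ffunP => j; rewrite !ffunE big1 // => i _; rewrite ffunE. Qed.

Lemma dnD (f g : expo (size At)) : dn (addx f g) = (dn f + dn g)%N.
Proof. by rewrite /dn -big_split; apply eq_bigr => i _; rewrite ffunE mulnDl. Qed.
Lemma dn_ex (k : 'I_(size At)) : dn (ex k) = lvl k.
Proof.
rewrite /dn (bigD1 k) //= big1 => [|i Hi]; by rewrite ffunE ?eqxx ?(negbTE Hi) ?mul1n ?addn0.
Qed.
Lemma dn0 : dn (zx _) = 0%N.
Proof. by rewrite /dn big1 // => i _; rewrite ffunE. Qed.

Lemma evalAt (f : expo (size At)) : evalm At f = (evalm A (kap f), (dn f)%:Z).
Proof.
elim/expo_ind: f => [|k f IH]; first by rewrite evalm0 kap0 evalm0 dn0.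
rewrite evalmD IH kapD evalmD kap_ex !evalm_ex dnD dn_ex PoszD (atK k).1.
by [].
Qed.

Lemma delta_dn (f : expo (size At)) : delta At f = (dn f)%:Z.
Proof.
rewrite /delta /dn (big_morph Posz PoszD (erefl 0%:Z)); apply eq_bigr => i _.
by rewrite PoszM (atK i).1.
Qed.

Lemma evalm_S (l : expo (size A)) : S (evalm A l).
Proof.
elim/expo_ind: l => [|j l IH]; first by rewrite evalm0; exact HS.1.
have Hj : is_atom S A`_j by apply/HA; exact: mem_nth.
rewrite evalmD evalm_ex; apply HS.2 => //; exact Hj.1.
Qed.

Lemma degD (l1 l2 : expo (size A)) : deg (evalm A (addx l1 l2)) = (deg (evalm A l1) + deg (evalm A l2))%N.
Proof. by rewrite evalmD; apply Hgr; apply evalm_S. Qed.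

Lemma dn_le (f : expo (size At)) : (dn f <= deg (evalm A (kap f)))%N.
Proof.
elim/expo_ind: f => [|k f IH]; first by rewrite dn0.
rewrite dnD kapD degD dn_ex kap_ex evalm_ex; apply leq_add => //; exact (atK k).2.
Qed.

Lemma exist_cfg (l : expo (size A)) (t : nat) : (t <= deg (evalm A l))%N -> exists g, kap g = l /\ dn g = t.
Proof.
elim/expo_ind: l t => [|j l IH] t.
  rewrite evalm0 deg0 leqn0 => /eqP ->; exists (zx _); by rewrite kap0 dn0.
rewrite degD evalm_ex => Ht.
have [k Ek] := at_ex (geq_minr t (deg A`_j)).
have Ht2 : leq (subn t (minn t (deg A`_j))) (deg (evalm A l)).
  by move: Ht; move: (deg A`_j) (deg (evalm A l)) => a b; lia.
have [g0 [Hg0 Dg0]] := IH _ Ht2.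
have [ak lk] := at_keys Ek.
exists (addx (ex k) g0); rewrite kapD kap_ex ak Hg0 dnD dn_ex lk Dg0; split=> //; lia.
Qed.


Variable R : expo (size At) -> expo (size At) -> Prop.
Hypothesis Hmove : forall k1 k2 k1' k2' : 'I_(size At),
  leq (lvl k1).+1 (deg A`_(akey k1)) -> leq 1 (lvl k2) ->
  At`_k1' = (A`_(akey k1), ((lvl k1).+1)%:Z) ->
  At`_k2' = (A`_(akey k2), ((lvl k2).-1)%:Z) ->
  R (addx (ex k1) (ex k2)) (addx (ex k1') (ex k2')).
Local Notation G := (gen_cong R).

Lemma Grefl f : G f f. Proof. exact: (gen_cong_cong R).1. Qed.
Lemma Gsym f g : G f g -> G g f. Proof. exact: (gen_cong_cong R).2.1. Qed.
Lemma Gtrans f g h : G f g -> G g h -> G f h. Proof. exact: (gen_cong_cong R).2.2.1. Qed.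
Lemma Gaddr f g h : G f g -> G (addx f h) (addx g h). Proof. exact: (gen_cong_cong R).2.2.2. Qed.
Lemma Gaddl f g h : G f g -> G (addx h f) (addx h g).
Proof. by rewrite ![addx h _]addxC; apply Gaddr. Qed.

Lemma raise d : forall (k : 'I_(size At)) (f0 : expo (size At)),
  leq (lvl k + d) (deg A`_(akey k)) -> leq d (dn f0) ->
  exists (k' : 'I_(size At)) (f1 : expo (size At)), At`_k' = (A`_(akey k), Posz (addn (lvl k) d)) /\
    G (addx (ex k) f0) (addx (ex k') f1) /\ kap f1 = kap f0 /\ (dn f1 + d = dn f0)%N.
Proof.
elim: d => [|d IH] k f0 Hd Hf0.
  exists k, f0; rewrite !addn0; split; first exact (atK k).1.
  by split; [apply Grefl | split].
have [k2 /andP [Hk2 Hl2]] : exists k2, (0 < f0 k2)%N && (0 < lvl k2)%N.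
  case: (pickP (fun i => (0 < f0 i)%N && (0 < lvl i)%N)) => [i Hi | H0]; first by exists i.
  move: Hf0; rewrite /dn big1 // => i _; move: (H0 i) => /negbT.
  by rewrite negb_and -!eqn0Ngt => /orP [] /eqP ->; rewrite ?muln0.
have [f00 Ef0] := decomp Hk2.
have Hk1 : leq (lvl k).+1 (deg A`_(akey k)) by move: Hd; lia.
have [k1' E1] := at_ex Hk1.
have Hk2' : leq (lvl k2).-1 (deg A`_(akey k2)) by have := (atK k2).2; lia.
have [k2' E2] := at_ex Hk2'.
have Hm : G (addx (ex k) f0) (addx (ex k1') (addx (ex k2') f00)).
  rewrite Ef0 !addxA; apply Gaddr; apply gen_cong_incl; exact: Hmove.
have [ak1 lk1] := at_keys E1.
have [ak2 lk2] := at_keys E2.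
have Hd' : leq (lvl k1' + d) (deg A`_(akey k1')) by rewrite ak1 lk1; move: Hd; lia.
have Hf0' : leq d (dn (addx (ex k2') f00)).
  by move: Hf0; rewrite Ef0 !dnD !dn_ex lk2; move: (dn f00) => x; lia.
have [k' [f1 [E' [G' [K' D']]]]] := IH _ _ Hd' Hf0'.
exists k', f1; split; first by rewrite E' ak1 lk1 addSnnS.
split; first exact: Gtrans Hm G'.
split; first by rewrite K' Ef0 !kapD !kap_ex ak2.
by move: D'; rewrite Ef0 !dnD !dn_ex lk2; move: (dn f1) (dn f00) => x y; lia.
Qed.

Lemma kap_zero h : kap h = zx _ -> h = zx _.
Proof.
move/ffunP => H; apply/ffunP => k; rewrite ffunE; move: (H (akey k)); rewrite !ffunE => Hk.
have C : (At`_k).1 == A`_(akey k) by apply/eqP; exact: (congr1 fst (atK k).1).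
by move: Hk; rewrite (bigD1 k) //= => /eqP; rewrite addn_eq0 => /andP [/eqP -> _].
Qed.

Lemma sum_kap_ex k f : (\sum_j kap (addx (ex k) f) j = (\sum_j kap f j).+1)%N.
Proof. by rewrite kapD sum_addx kap_ex sum_ex add1n. Qed.

Lemma NF N : forall f g, (\sum_j kap f j)%N = N -> kap f = kap g -> dn f = dn g -> G f g.
Proof.
elim: N => [|N IH] f g HN Hk Hd.
  have Hf0 : kap f = zx _.
    apply/ffunP => j; rewrite [RHS]ffunE.
    by move: HN; rewrite (bigD1 j) //= => /eqP; rewrite addn_eq0 => /andP [/eqP -> _].
  by rewrite (kap_zero Hf0) (kap_zero (etrans (esym Hk) Hf0)); apply Grefl.
have [j /andP [_ Hj]] : exists j, true && (0 < kap f j)%N by apply: sum_pos; rewrite HN.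
have Hjg : (0 < kap g j)%N by rewrite -Hk.
move: Hj Hjg; rewrite !ffunE => /sum_pos [k /andP [/eqP Ek Hfk]] /sum_pos [k2 /andP [/eqP Ek2 Hgk]].
have ak := akey_of Ek; have ak2 := akey_of Ek2.
have [f0 Ef] := decomp Hfk; have [g0 Eg] := decomp Hgk.
set t := minn (deg A`_j) (dn f).
have Hlk := (atK k).2; have Hlk2 := (atK k2).2.
rewrite ak in Hlk; rewrite ak2 in Hlk2.
have Hdf : dn f = (lvl k + dn f0)%N by rewrite Ef dnD dn_ex.
have Hdg : dn g = (lvl k2 + dn g0)%N by rewrite Eg dnD dn_ex.
have R1 : leq (lvl k + (t - lvl k)) (deg A`_(akey k)).
  by rewrite ak /t; move: (deg A`_j) (lvl k) (dn f) Hlk Hdf => a b c; lia.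
have R2 : leq (t - lvl k) (dn f0) by rewrite /t; move: (deg A`_j) (lvl k) (dn f) (dn f0) Hdf => a b c e; lia.
have [k' [f1 [E1 [G1 [K1 D1]]]]] := raise R1 R2.
have R1' : leq (lvl k2 + (t - lvl k2)) (deg A`_(akey k2)).
  by rewrite ak2 /t; move: (deg A`_j) (lvl k2) (dn f) Hlk2 Hdg Hd => a b c; lia.
have R2' : leq (t - lvl k2) (dn g0).
  by rewrite /t; move: (deg A`_j) (lvl k2) (dn f) (dn g0) Hdg Hd => a b c e; lia.
have [k'' [g1 [E2 [G2 [K2 D2]]]]] := raise R1' R2'.
have Ekk : ex k'' = ex k'.
  rewrite -!uex E1 E2 ak ak2; congr (unitx _ (_, Posz _)).
  by rewrite /t; move: (deg A`_j) (lvl k) (lvl k2) (dn f) (dn f0) (dn g0) (dn g) Hlk Hlk2 Hdf Hdg Hd => a b c e x y z; lia.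
rewrite Ekk in G2.
have K0 : kap f0 = kap g0.
  by move: Hk; rewrite Ef Eg !kapD !kap_ex ak ak2; exact: addxI.
rewrite Ef Eg; apply: Gtrans G1 _; apply: Gtrans (Gsym G2); apply Gaddl.
apply: IH; first by move: HN; rewrite Ef sum_kap_ex K1 => -[].
  by rewrite K1 K2.
move: D1 D2; rewrite /t.
by move: (deg A`_j) (dn f) (dn f1) (dn g1) (dn g) (lvl k) (lvl k2) (dn f0) (dn g0) Hlk Hlk2 Hdf Hdg Hd => u v a b c e h i l; lia.
Qed.

Lemma NF' f g : kap f = kap g -> dn f = dn g -> G f g.
Proof. exact: NF. Qed.


Variables (Lam : expo (size A) -> expo (size A) -> Prop)
  (lift : expo (size A) -> nat -> expo (size At)).
Hypothesis Hgen : generates Lam (defcong A).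
Hypothesis Hlift : forall l, (exists m, Lam l m \/ Lam m l) ->
     forall i : nat, (i <= deg (evalm A l))%N ->
       kappa A At (lift l i) = l /\ delta At (lift l i) = i%:Z.
Hypothesis HR1 : forall l m (i : nat), Lam l m -> (i <= deg (evalm A l))%N ->
  R (lift l i) (lift m i).

Definition PP (l l' : expo (size A)) := evalm A l = evalm A l' /\
  forall f g, kap f = l -> kap g = l' -> dn f = dn g -> G f g.

Lemma PP_cong : is_congruence PP.
Proof.
split; [|split; [|split]].
- by move=> l; split=> // f g Hf Hg Hd; apply: NF' => //; rewrite Hf Hg.
- move=> l l' [E H]; split=> // f g Hf Hg Hd; apply: Gsym; exact: H.
- move=> l l' l'' [E1 H1] [E2 H2]; split; first by rewrite E1.
  move=> f h Hf Hh Hd.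
  have Hb : leq (dn f) (deg (evalm A l')) by rewrite -E1 -Hf; exact: dn_le.
  have [g [Hg Dg]] := exist_cfg Hb.
  apply: (Gtrans (H1 f g Hf Hg (esym Dg))); apply: H2 => //; by rewrite Dg.
- move=> l l' h [E H]; split; first by rewrite !evalmD E.
  move=> f g Hf Hg Hd.
  have Hb := dn_le f; rewrite Hf degD in Hb.
  set t1 := minn (dn f) (deg (evalm A l)).
  have Ht1 : leq t1 (deg (evalm A l)) by rewrite /t1 geq_minr.
  have Ht2 : leq (dn f - t1) (deg (evalm A h)).
    by rewrite /t1; move: (dn f) (deg (evalm A l)) (deg (evalm A h)) Hb => a b c; lia.
  have Ht1' : leq t1 (deg (evalm A l')) by rewrite -E.
  have [f1 [K1 D1]] := exist_cfg Ht1.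
  have [f2 [K2 D2]] := exist_cfg Ht2.
  have [g1 [K1' D1']] := exist_cfg Ht1'.
  apply: (@Gtrans _ (addx f1 f2)).
    apply: NF'; first by rewrite kapD K1 K2.
    by rewrite dnD D1 D2 /t1; move: (dn f) (deg (evalm A l)) => a b; lia.
  apply: (@Gtrans _ (addx g1 f2)).
    by apply: Gaddr; apply: H => //; rewrite D1 D1'.
  apply: NF'; first by rewrite kapD K1' K2.
  by rewrite dnD D1' D2 -Hd /t1; move: (dn f) (deg (evalm A l)) => a b; lia.
Qed.

Lemma lift_facts l (i : nat) : (exists m, Lam l m \/ Lam m l) -> (i <= deg (evalm A l))%N ->
  kap (lift l i) = l /\ dn (lift l i) = i.
Proof.
move=> Hex Hi; have [K D] := Hlift Hex Hi; split=> //.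
by move: D; rewrite delta_dn => -[].
Qed.

Lemma Lam_PP l m : Lam l m -> PP l m.
Proof.
move=> Hlm.
have E : evalm A l = evalm A m by apply/(Hgen l m) => C _ HR; exact: HR.
split=> // f g Hf Hg Hd.
have Hi : leq (dn f) (deg (evalm A l)) by rewrite -Hf; exact: dn_le.
have Hi' : leq (dn f) (deg (evalm A m)) by rewrite -E.
have Hexl : exists m', Lam l m' \/ Lam m' l by exists m; left.
have Hexm : exists m', Lam m m' \/ Lam m' m by exists l; right.
have [K1 D1] := lift_facts Hexl Hi.
have [K2 D2] := lift_facts Hexm Hi'.
apply: (@Gtrans _ (lift l (dn f))); first by apply: NF'; rewrite ?K1 ?D1.
apply: (@Gtrans _ (lift m (dn f))); first by apply: gen_cong_incl; exact: HR1.
by apply: NF'; rewrite ?K2 ?D2.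
Qed.

Lemma main_dir f g : defcong At f g -> G f g.
Proof.
rewrite /defcong !evalAt => -[E1 E2].
have : gen_cong Lam (kap f) (kap g) by apply/Hgen.
by move=> /(_ PP PP_cong Lam_PP) [_ H]; apply: H.
Qed.

End Main.

Unset Implicit Arguments.
Local Open Scope ring_scope.

Theorem theorem4p4 (n : nat) (S : 'rV[int]_n -> Prop) (deg : 'rV[int]_n -> nat)
  (A : seq 'rV[int]_n) (At : seq ('rV[int]_n * int))
  (Lam : expo (size A) -> expo (size A) -> Prop)
  (lift : expo (size A) -> nat -> expo (size At)) :
  submonoid S -> fingen S -> reduced S -> graded S deg ->
  uniq A -> (forall x, x \in A <-> is_atom S x) ->
  uniq At -> (forall x, x \in At <-> is_atom (tilde S deg) x) ->
  generates Lam (defcong A) ->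
  (forall l, (exists m, Lam l m \/ Lam m l) ->
     forall i : nat, (i <= deg (evalm A l))%N ->
       kappa A At (lift l i) = l /\ delta At (lift l i) = i%:Z) ->
  generates
    (fun f g =>
       (exists l m (i : nat), Lam l m /\ (i <= deg (evalm A l))%N /\
                              f = lift l i /\ g = lift m i)
       \/
       (exists (a b : 'rV[int]_n) (k l : nat),
          is_atom S a /\ is_atom S b /\ (k.+1 <= deg a)%N /\ (1 <= l <= deg b)%N /\
          f = addx (unitx At (a, k%:Z)) (unitx At (b, l%:Z)) /\
          g = addx (unitx At (a, (k.+1)%:Z)) (unitx At (b, (l.-1)%:Z))))
    (defcong At).
Proof.
move=> HS _ _ Hgr HAu HA HAtu HAt Hgen Hlift f g.
split.
- apply: (@main_dir n S deg A At HS Hgr HAu HA HAtu HAt _ _ Lam lift Hgen Hlift).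
  + move=> k1 k2 k1' k2' H1 H2 E1 E2; right.
    have [e1 _] := atK HS Hgr HAu HA HAtu HAt k1.
    have [e2 _] := atK HS Hgr HAu HA HAtu HAt k2.
    exists (At`_k1).1, (At`_k2).1, (lvl k1), (lvl k2).
    have Ha1 : is_atom S (At`_k1).1 by apply/HA; rewrite e1; exact: mem_nth.
    have Ha2 : is_atom S (At`_k2).1 by apply/HA; rewrite e2; exact: mem_nth.
    have X1 : (At`_k1).1 = A`_(akey HS Hgr HAu HA HAtu HAt k1) by rewrite e1.
    have X2 : (At`_k2).1 = A`_(akey HS Hgr HAu HA HAtu HAt k2) by rewrite e2.
    have L1 : At`_k1 = ((At`_k1).1, (lvl k1)%:Z) by rewrite X1.
    have L2 : At`_k2 = ((At`_k2).1, (lvl k2)%:Z) by rewrite X2.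
    split=> //; split=> //; split; first by rewrite X1.
    split; first by apply/andP; split=> //; rewrite X2; exact: (atK HS Hgr HAu HA HAtu HAt k2).2.
    split; first by rewrite -L1 -L2 !uex.
    by rewrite X1 X2 -E1 -E2 !uex.
  + by move=> l m i Hlm Hi; left; exists l, m, i.
- move=> H; apply: H.
  + split; [by []|split; [by []|split]].
    * by move=> p q r; rewrite /defcong => ->.
    * by move=> p q r; rewrite /defcong !evalmD => ->.
  + move=> p q [[l [m [i [Hlm [Hi [-> ->]]]]]] | [a [b [k [l [Ha [Hb [Hk [Hl [-> ->]]]]]]]]]].
    * have E : evalm A l = evalm A m by apply/(Hgen l m) => C _ HR; exact: HR.
      have Hexl : exists m', Lam l m' \/ Lam m' l by exists m; left.
      have Hexm : exists m', Lam m m' \/ Lam m' m by exists l; right.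
      have Hi' : (i <= deg (evalm A m))%N by rewrite -E.
      have [K1 D1] := lift_facts HS Hgr HAu HA HAtu HAt Hlift Hexl Hi.
      have [K2 D2] := lift_facts HS Hgr HAu HA HAtu HAt Hlift Hexm Hi'.
      by rewrite /defcong !(evalAt HS Hgr HAu HA HAtu HAt) K1 K2 D1 D2 E.
    * have Hl1 : (1 <= l)%N by case/andP: Hl.
      have Hl2 : (l <= deg b)%N by case/andP: Hl.
      have M1 := mem_At HS Hgr HAu HAtu HAt Ha (ltnW Hk).
      have M2 := mem_At HS Hgr HAu HAtu HAt Ha Hk.
      have M3 := mem_At HS Hgr HAu HAtu HAt Hb Hl2.
      have M4 : (b, (l.-1)%:Z) \in At by apply: (mem_At HS Hgr HAu HAtu HAt Hb); move: Hl2; lia.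
      rewrite /defcong !evalmD !(unitx_eval HAtu) //.
      change ((a + b, k%:Z + l%:Z) = (a + b, (k.+1)%:Z + (l.-1)%:Z)).
      by rewrite -!PoszD; congr (_, Posz _); move: Hl1; lia.
Qed.
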